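(* For $A,x\in\mathbb{R}$ define $E_0(A,x):=1$, $E_1(A,x):=e^{(1-x)A}$ and, for $n\ge2$, \[ E_n(A,x):=\begin{cases} \exp\!\Big(\big[x(E_1+E_3+\cdots+E_{n-1})-\tfrac n2\big]A\Big), & n \text{ even},\\[4pt] \exp\!\Big(\big[\tfrac{n+1}{2}-x(E_0+E_2+\cdots+E_{n-1})\big]A\Big), & n\text{ odd},\end{cases} \] with all $E_j$ evaluated at $(A,x)$. Define $\varphi_1(A,x):=x-1$, $\varphi_n(A,x):=\varphi_{n-1}(A,x)-1+xE_{n-1}(A,x)$ for $n\ge2$, and the polynomial $p_n(A):=\frac{\partial\varphi_n}{\partial x}(A,1)$. Then for every $n\ge1$, the polynomials $\frac{p_{2n}(A)}{2-A}$ and $p_{2n+1}(A)$ are even functions of $A$.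
   Context: For every $n\ge1$, $2-A$ divides $p_{2n}(A)$, so $\frac{p_{2n}(A)}{2-A}$ is a polynomial. *)

(* Defs.v *)
From HB Require Import structures.
From mathcomp Require Import all_boot all_order all_algebra.
From mathcomp Require Import all_classical all_reals all_analysis.
Set Implicit Arguments. Unset Strict Implicit. Unset Printing Implicit Defensive.
Import Order.TTheory GRing.Theory Num.Theory.
Local Open Scope ring_scope.

Section Defs.
Variable R : realType.

(* Next value E_n(A,x), given s = [:: E_0; ...; E_{n-1}]. *)
Definition E_next (A x : R) (n : nat) (s : seq R) : R :=
  if n == 1%N then expR ((1 - x) * A)
  else if odd n then
    expR (((n.+1)%:R / 2 - x * \sum_(j < n | ~~ odd j) s`_j) * A)
  else
    expR ((x * \sum_(j < n | odd j) s`_j - n%:R / 2) * A).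

Fixpoint Elist (A x : R) (n : nat) : seq R :=
  match n with
  | 0 => [:: 1]
  | m.+1 => let s := Elist A x m in rcons s (E_next A x m.+1 s)
  end.

Definition E (n : nat) (A x : R) : R := nth 0 (Elist A x n) n.

(* phi_1 = x - 1, phi_n = phi_{n-1} - 1 + x E_{n-1} for n >= 2;
   phi_0 is unused (set to 0). *)
Fixpoint phi (n : nat) (A x : R) : R :=
  match n with
  | 0 => 0
  | m.+1 => if m is 0 then x - 1 else phi m A x - 1 + x * E m A x
  end.

Definition p (n : nat) (A : R) : R := derive1 (fun x => phi n A x) 1.

End Defs.

(* Main.v *)
Require Import Defs.
From HB Require Import structures.
From mathcomp Require Import all_boot all_order all_algebra.
From mathcomp Require Import all_classical all_reals all_analysis.
From mathcomp Require Import ring zify.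
Import Order.TTheory GRing.Theory Num.Theory.
Local Open Scope ring_scope.

Module Helpers.
Set Implicit Arguments. Unset Strict Implicit. Unset Printing Implicit Defensive.
Section Alg.
Variable R : realType.

Fixpoint ab (A : R) (k : nat) : R * R :=
  match k with
  | 0 => (0, 1)
  | k.+1 => let a := (ab A k).1 in let b := (ab A k).2 in
            let a' := a + 1 - A * b in (a', b + 1 + A * a')
  end.
Definition aa A k := (ab A k).1.
Definition bb A k := (ab A k).2.
Lemma aaS A k : aa A k.+1 = aa A k + 1 - A * bb A k. Proof. by []. Qed.
Lemma bbS A k : bb A k.+1 = bb A k + 1 + A * aa A k.+1. Proof. by []. Qed.
Lemma aa0 A : aa A 0 = 0. Proof. by []. Qed.
Lemma bb0 A : bb A 0 = 1. Proof. by []. Qed.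

Definition bp A k := if k is k'.+1 then bb A k' else 0.
Lemma bpE A k : bp A k = bb A k - 1 - A * aa A k.
Proof. case: k => [|k] /=; first by rewrite /bb /aa /=; ring. rewrite bbS; ring. Qed.

Definition s A k := aa A k + bb A k.
Definition t A k := aa A k + bp A k.

Lemma s_rec A k : s A k.+2 = (2 - A ^+ 2) * s A k.+1 - s A k.
Proof. rewrite /s; do 3 rewrite ?bbS ?aaS. ring. Qed.
Lemma t_rec A k : t A k.+2 = (2 - A ^+ 2) * t A k.+1 - t A k.
Proof. rewrite /t !bpE; do 3 rewrite ?bbS ?aaS; ring. Qed.

Lemma s_even k : forall A, s (- A) k = s A k.
Proof.
suff H : forall A, s (- A) k = s A k /\ s (- A) k.+1 = s A k.+1 by move=> A; case: (H A).
move=> A; elim: k => [|k [IH1 IH2]].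
  by rewrite /s /aa /bb /=; split; ring.
by split => //; rewrite !s_rec IH1 IH2 sqrrN.
Qed.

Lemma t_poly k : exists r : {poly R},
  (forall A, t A k = (2 - A) * r.[A]) /\ (forall A, r.[- A] = r.[A]).
Proof.
suff H : exists r r' : {poly R},
  [/\ (forall A, t A k = (2 - A) * r.[A]), (forall A, r.[- A] = r.[A]),
      (forall A, t A k.+1 = (2 - A) * r'.[A]) & (forall A, r'.[- A] = r'.[A])].
  by case: H => r [r' [H1 H2 _ _]]; exists r.
elim: k => [|k [r [r' [H1 H2 H3 H4]]]].
  exists 0, 1; split => A; rewrite ?hornerE //.
    by rewrite /t /aa /bp /=; ring.
  by rewrite /t /bp /aa /bb /=; ring.
exists r', ((2%:P - 'X^2) * r' - r); split => // A.
  rewrite t_rec H3 H1 !(hornerD, hornerN, hornerM, hornerC, hornerXn, hornerX); ring.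
by rewrite !(hornerD, hornerN, hornerM, hornerC, hornerXn, hornerX) H2 H4 mulrNN.
Qed.
End Alg.

Section Der.
Variable R : realType.
Implicit Types (f g S : R -> R).

Lemma is_derive_ext f g (x : R) df : (forall y, f y = g y) ->
  is_derive x (1:R) f df -> is_derive x (1:R) g df.
Proof. by move=> /funext ->. Qed.

Lemma H_exp f (x df : R) : is_derive x 1 f df ->
  is_derive x 1 (fun y => expR (f y)) (expR (f x) * df).
Proof.
move=> hf.
have df1 : derivable f x 1 by case: hf.
have dg : derivable (@expR R) (f x) 1 by exact: ex_derive.
apply: DeriveDef.
  apply/derivable1_diffP; apply: differentiable_comp; exact/derivable1_diffP.
rewrite -derive1E.
have := derive1_comp df1 dg; rewrite /comp => ->.
by rewrite !derive1E !derive_val mulrC.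
Qed.

Lemma H_mulx S (x dS : R) : is_derive x 1 S dS ->
  is_derive x 1 (fun y => y * S y) (x * dS + S x).
Proof.
move=> hS.
have h := is_deriveM (is_derive_id x (1:R)) hS.
apply: (is_derive_ext _ (is_derive_eq h _)) => //.
by rewrite /GRing.scale /= mulr1.
Qed.

Lemma H_add f g (x df dg : R) : is_derive x 1 f df -> is_derive x 1 g dg ->
  is_derive x 1 (fun y => f y + g y) (df + dg).
Proof. move=> hf hg; exact: (is_derive_ext _ (is_deriveD hf hg)). Qed.

Lemma H_scale f (x df k : R) : is_derive x 1 f df ->
  is_derive x 1 (fun y => k * f y) (k * df).
Proof. move=> hf; exact: (is_derive_ext _ (is_deriveZ k hf)). Qed.

Lemma H_cst (x c : R) : is_derive x 1 (fun _ : R => c) 0.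
Proof. exact: is_derive_cst. Qed.

Lemma H_sum (x : R) (h : nat -> R -> R) (dh : nat -> R) n :
  (forall i, (i < n)%N -> is_derive x 1 (h i) (dh i)) ->
  is_derive x 1 (fun y => \sum_(i < n) h i y) (\sum_(i < n) dh i).
Proof.
elim: n => [|n IH] H.
  rewrite big_ord0; apply: (is_derive_ext _ (H_cst x 0)) => y; by rewrite big_ord0.
rewrite big_ord_recr /=.
apply: (is_derive_ext _ (H_add (IH _) (H n _))) => //.
  by move=> y; rewrite big_ord_recr.
by move=> i hi; apply: H; apply: ltnW.
Qed.

Lemma half2 (n : nat) : (n.*2)%:R / 2 = n%:R :> R.
Proof. by rewrite -muln2 natrM mulfK // pnatr_eq0. Qed.

Lemma sum_odd (f : nat -> R) k :
  \sum_(j < k.*2 | odd j) f j = \sum_(i < k) f i.*2.+1.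
Proof.
elim: k => [|k IH]; first by rewrite !big_ord0.
rewrite doubleS big_mkcond big_ord_recr big_ord_recr /= -big_mkcond IH [in RHS]big_ord_recr /=.
by rewrite odd_double /= addr0.
Qed.

Lemma sum_even (f : nat -> R) k :
  \sum_(j < k.*2.+1 | ~~ odd j) f j = \sum_(i < k.+1) f i.*2.
Proof.
elim: k => [|k IH]; first by rewrite big_mkcond !big_ord_recr !big_ord0.
rewrite doubleS big_mkcond big_ord_recr big_ord_recr /= -big_mkcond IH [in RHS]big_ord_recr /=.
by rewrite odd_double /= addr0.
Qed.

Lemma size_Elist (A x : R) n : size (Elist A x n) = n.+1 :> nat.
Proof. by elim: n => //= n IH; rewrite size_rcons IH. Qed.

Lemma nth_Elist (A x : R) n j : (j <= n)%N -> nth 0 (Elist A x n) j = E j A x :> R.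
Proof.
elim: n j => [|n IH] j; first by rewrite leqn0 => /eqP ->.
rewrite leq_eqVlt => /orP[/eqP -> //|]; rewrite ltnS => hj.
by rewrite /= nth_rcons size_Elist ltnS hj IH.
Qed.

Lemma E_S (A x : R) n : E n.+1 A x = E_next A x n.+1 (Elist A x n) :> R.
Proof. by rewrite /E /= nth_rcons size_Elist ltnn eqxx. Qed.

Lemma E_odd (A x : R) k : E k.+1.*2.+1 A x =
  expR ((k.+2%:R - x * \sum_(i < k.+2) E i.*2 A x) * A) :> R.
Proof.
rewrite E_S /E_next.
have -> : (k.+1.*2.+1 == 1)%N = false by [].
have -> : odd k.+1.*2.+1 = true by rewrite /= odd_double.
rewrite (eq_bigr (fun j : 'I_(k.+1.*2.+1) => E j A x)); last by move=> j _; apply: nth_Elist; rewrite -ltnS.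
by rewrite (sum_even (fun j => E j A x) k.+1) -(doubleS k.+1) half2.
Qed.

Lemma E_even (A x : R) k : E k.+1.*2 A x =
  expR ((x * \sum_(i < k.+1) E i.*2.+1 A x - k.+1%:R) * A) :> R.
Proof.
rewrite doubleS E_S /E_next.
have -> : (k.*2.+2 == 1)%N = false by [].
have -> : odd k.*2.+2 = false by rewrite /= odd_double.
rewrite (eq_bigr (fun j : 'I_(k.*2.+2) => E j A x)); last by move=> j _; apply: nth_Elist; rewrite -ltnS.
by rewrite -doubleS (sum_odd (fun j => E j A x) k.+1) half2.
Qed.

Lemma E_one (A x : R) : E 1 A x = expR ((1 - x) * A).
Proof. by rewrite E_S. Qed.
End Der.

Section Main.
Variable R : realType.
Variable A : R.

Definition ev (n : nat) : R := if odd n then - A * bb A n./2 else A * aa A n./2.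

Lemma ev_odd i : ev i.*2.+1 = - A * bb A i.
Proof. by rewrite /ev /= odd_double /= uphalf_double. Qed.
Lemma ev_even i : ev i.*2 = A * aa A i.
Proof. by rewrite /ev odd_double doubleK. Qed.

Lemma SO k : \sum_(i < k) ev i.*2.+1 = aa A k - k%:R.
Proof.
elim: k => [|k IH]; first by rewrite big_ord0 aa0 subr0.
by rewrite big_ord_recr /= IH ev_odd aaS -addn1 natrD; ring.
Qed.

Lemma SV k : \sum_(i < k.+1) ev i.*2 = bb A k - k.+1%:R.
Proof.
elim: k => [|k IH]; first by rewrite big_ord_recr big_ord0 /= ev_even aa0 bb0; ring.
by rewrite big_ord_recr /= IH ev_even bbS -(addn1 k.+1) natrD; ring.
Qed.

Lemma sum_ones (F : nat -> R) k : (forall i, (i < k)%N -> F i = 1) ->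
  \sum_(i < k) F i = k%:R.
Proof.
move=> H; rewrite (eq_bigr (fun _ => 1)); last by move=> i _; apply: H.
by rewrite sumr_const card_ord.
Qed.

Lemma E_deriv m : forall j, (j <= m)%N ->
  is_derive (1:R) (1:R) (fun x => E j A x) (ev j) /\ E j A 1 = 1.
Proof.
elim: m => [|m IH] j.
  rewrite leqn0 => /eqP ->.
  split; last by [].
  rewrite /ev /= aa0 mulr0.
  by apply: (is_derive_ext _ (H_cst 1 1)) => y.
rewrite leq_eqVlt => /orP[/eqP ->|]; last by rewrite ltnS; apply: IH.
have [k [Hk|Hk]] : exists k, m.+1 = k.+1.*2 \/ m.+1 = k.*2.+1.
  case: m {IH} => [|m]; first by exists 0; right.
  rewrite -[in m.+2](odd_double_half m); case: (odd m) => /=.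
    by exists (m./2).+1; right; lia.
  by exists m./2; left; lia.
-
  rewrite Hk.
  have hS : is_derive (1:R) (1:R) (fun x => \sum_(i < k.+1) E i.*2.+1 A x)
              (\sum_(i < k.+1) ev i.*2.+1).
    apply: (H_sum (h := fun i x => E i.*2.+1 A x) (dh := fun i => ev i.*2.+1)) => i hi; have [] := IH i.*2.+1 => //; lia.
  have S1 : \sum_(i < k.+1) E i.*2.+1 A 1 = k.+1%:R.
    apply: (sum_ones (F := fun i => E i.*2.+1 A 1)) => i hi; have [] := IH i.*2.+1 => //; lia.
  have h := H_exp (H_add (H_scale A (H_mulx hS)) (H_cst 1 (- (k.+1%:R * A)))).
  split.
    have -> : (fun x => E k.+1.*2 A x) =
      (fun y => expR ((y * \sum_(i < k.+1) E i.*2.+1 A y - k.+1%:R) * A)).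
      by apply/funext => y; rewrite E_even.
    apply: (is_derive_ext _ (is_derive_eq h _)); first by move=> y /=; congr expR; ring.
    rewrite S1 SO ev_even.
    have -> : A * (1 * k.+1%:R) - k.+1%:R * A = 0 by ring.
    by rewrite expR0; ring.
  by rewrite (E_even A 1 k) S1 mul1r subrr mul0r expR0.
- rewrite Hk; case: k Hk => [|k] Hk.
    split; last by rewrite (E_one A 1) subrr mul0r expR0.
    have hid : is_derive (1:R) (1:R) (fun y : R => y) 1 by exact: is_derive_id.
    have h := H_exp (H_add (H_scale (- A) hid) (H_cst 1 A)).
    have -> : (fun x => E 0.*2.+1 A x) = (fun y => expR (- A * y + A)).
      by apply/funext => y; rewrite E_one; congr expR; ring.
    apply: (is_derive_eq h).
    by rewrite /ev /= bb0 mulr1 addNr expR0 mul1r addr0.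
  have hS : is_derive (1:R) (1:R) (fun x => \sum_(i < k.+2) E i.*2 A x)
              (\sum_(i < k.+2) ev i.*2).
    apply: (H_sum (h := fun i x => E i.*2 A x) (dh := fun i => ev i.*2)) => i hi; have [] := IH i.*2 => //; lia.
  have S1 : \sum_(i < k.+2) E i.*2 A 1 = k.+2%:R.
    apply: (sum_ones (F := fun i => E i.*2 A 1)) => i hi; have [] := IH i.*2 => //; lia.
  have h := H_exp (H_add (H_scale (- A) (H_mulx hS)) (H_cst 1 (k.+2%:R * A))).
  split.
    have -> : (fun x => E k.+1.*2.+1 A x) =
      (fun y => expR ((k.+2%:R - y * \sum_(i < k.+2) E i.*2 A y) * A)).
      by apply/funext => y; rewrite E_odd.
    apply: (is_derive_ext _ (is_derive_eq h _)); first by move=> y /=; congr expR; ring.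
    rewrite S1 (SV k.+1) ev_odd.
    have -> : - A * (1 * k.+2%:R) + k.+2%:R * A = 0 by ring.
    by rewrite expR0; ring.
  by rewrite (E_odd A 1 k) S1 mul1r subrr mul0r expR0.
Qed.

Fixpoint P (n : nat) : R :=
  match n with 0 => 0 | m.+1 => if m is 0 then 1 else P m + 1 + ev m end.

Lemma phi_deriv n : (1 <= n)%N -> is_derive (1:R) (1:R) (fun x => phi n A x) (P n).
Proof.
elim: n => [//|[|m] IH] _.
  have h := H_add (is_derive_id (1:R) (1:R)) (H_cst 1 (-1)).
  by apply: (is_derive_ext _ (is_derive_eq h _)) => //; rewrite addr0.
have [hd _] := E_deriv (leqnn m.+1).
have h := H_add (H_add (IH isT) (H_cst 1 (-1))) (H_mulx hd).
apply: (is_derive_ext _ (is_derive_eq h _)) => //.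
have [_ ->] := E_deriv (leqnn m.+1).
by rewrite /= mul1r addr0; ring.
Qed.

Lemma p_P n : (1 <= n)%N -> p n A = P n.
Proof. by move=> hn; rewrite /p derive1E; have h := phi_deriv hn; rewrite derive_val. Qed.

Lemma P_S m : P m.+2 = P m.+1 + 1 + ev m.+1.
Proof. by []. Qed.

Lemma P_st k : P k.*2.+1 = s A k /\ P k.+1.*2 = t A k.+1.
Proof.
elim: k => [|k [IH1 IH2]].
  split; first by rewrite /s aa0 bb0 /= add0r.
  by rewrite /t /bp /= aaS aa0 bb0 ev_odd bb0 /=; ring.
have E1 : P k.+1.*2.+1 = s A k.+1.
  rewrite (P_S k.*2.+1) -doubleS IH2 ev_even /t /bp /s bbS; ring.
split => //.
by rewrite (doubleS k.+1) (P_S k.+1.*2) E1 ev_odd /s /t /bp (aaS A k.+1); ring.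
Qed.
End Main.

End Helpers.
Import Helpers.

Theorem corollary4p9 (R : realType) (n : nat) (hn : (1 <= n)%N) :
  (exists q : {poly R},
      (forall A : R, p (2 * n) A = (2 - A) * q.[A]) /\
      (forall A : R, q.[- A] = q.[A])) /\
  (forall A : R, p (2 * n + 1) (- A) = p (2 * n + 1) A).
Proof.
case: n hn => [//|k] _.
split.
  have [q [H1 H2]] := t_poly R k.+1.
  exists q; split => // A.
  by rewrite mul2n p_P // (proj2 (P_st A k)) H1.
move=> A.
rewrite addn1 mul2n !p_P // !(proj1 (P_st _ _)).
exact: s_even.
Qed.
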